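(* Let $L$ be a finite lattice, $\varphi\in M_1(L)$, and let $\Phi\in M_\infty(\mathcal L)$ satisfy $\Pi(\Phi)=\varphi$. Then $\Phi$ is the Möbius extension of $\varphi$ (that is, $\varphi$ is completely monotone and $\Phi$ equals its Möbius extension) if and only if $\Phi(\langle a,b\rangle^* )=\varphi(a\wedge b)$ for every pair $\{a,b\}$ of elements of $L$.
   Context: $L$ is a finite lattice with order $\le$, meet $\wedge$. For $A\subseteq L$, $\langle A\rangle^*=\{x\in L: x\ge a \text{ for some } a\in A\}$ is the up-set generated by $A$; $\langle a,b\rangle^*=\langle\{a,b\}\rangle^*$ and $\langle a\rangle^*=\langle\{a\}\rangle^*$. $\mathcal L$ is the set of nonempty up-sets (dual order ideals) of $L$, ordered by $U\preceq V$ iff $U\supseteq V$; it is a distributive lattice whose meet is union. For a finite lattice $P$, $\nabla_a\varphi(x)=\varphi(x)-\varphi(x\wedge a)$, successive differences $\nabla_{a_1,\dots,a_n}$ are iterates, and $\varphi$ is completely monotone if all $\nabla_{a_1,\ldots,a_n}\varphi\ge0$ ($n\ge1$). $M_1(L)$ is the set of nonnegative monotone functions on $L$, $M_\infty(L)$ and $M_\infty(\mathcal L)$ the sets of nonnegative completely monotone functions on $L$, resp. on $(\mathcal L,\preceq)$. $\Pi:M_\infty(\mathcal L)\to M_1(L)$ is $\Pi(\Phi)(x)=\Phi(\langle x\rangle^* )$. The Möbius inverse of $\Phi$ on $\mathcal L$ is the unique $F$ with $\Phi(U)=\sum_{V\preceq U}F(V)$. For $\varphi\in M_\infty(L)$ with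 Möbius inverse $f$ (i.e. $\varphi(x)=\sum_{y\le x}f(y)$), its Möbius extension is the function $\Phi(U)=\sum_{V\preceq U}F(V)$ on $\mathcal L$ with $F(\langle x\rangle^* )=f(x)$ for $x\in L$ and $F=0$ on non-principal up-sets. *)

(* Defs.v *)
From HB Require Import structures.
From mathcomp Require Import all_boot all_order all_algebra.
From mathcomp Require Import reals.
Set Implicit Arguments. Unset Strict Implicit. Unset Printing Implicit Defensive.
Import Order.TTheory GRing.Theory Num.Theory.
Local Open Scope ring_scope.
Local Open Scope order_scope.

Section Defs.
Context {d : Order.disp_t} {L : finLatticeType d} {R : realType}.

Definition upgen (A : {set L}) : {set L} := [set x | [exists a in A, a <= x]].
Definition up1 (a : L) : {set L} := upgen [set a].
Definition up2 (a b : L) : {set L} := upgen [set a; b].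

Definition is_upset (U : {set L}) : bool :=
  [forall x, forall y, (x \in U) && (x <= y) ==> (y \in U)].
Definition in_calL (U : {set L}) : bool := is_upset U && (U != set0).

Definition nabla {T : Type} (meet : T -> T -> T) (a : T) (phi : T -> R) : T -> R :=
  fun x => phi x - phi (meet x a).
Definition nablas {T : Type} (meet : T -> T -> T) (s : seq T) (phi : T -> R) : T -> R :=
  foldr (nabla meet) phi s.

(* complete monotonicity of phi on the lattice with carrier {x | P x} and meet [meet] *)
Definition completely_monotone_on {T : Type} (P : T -> bool) (meet : T -> T -> T)
  (phi : T -> R) : Prop :=
  forall (s : seq T) (x : T), (0 < size s)%N -> all P s -> P x ->
    0 <= nablas meet s phi x.

Definition M1 (phi : L -> R) : Prop :=
  (forall x, 0 <= phi x) /\ (forall x y, x <= y -> phi x <= phi y).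
Definition Minf_L (phi : L -> R) : Prop :=
  (forall x, 0 <= phi x) /\ completely_monotone_on (fun _ => true) Order.meet phi.
(* M_infty(\mathcal L): order U <= V iff U \supseteq V, meet is union *)
Definition Minf_calL (Phi : {set L} -> R) : Prop :=
  (forall U, in_calL U -> 0 <= Phi U) /\
  completely_monotone_on in_calL (fun U V => U :|: V) Phi.

Definition Pi (Phi : {set L} -> R) : L -> R := fun x => Phi (up1 x).

Definition is_mobius_inverse (phi f : L -> R) : Prop :=
  forall x, phi x = \sum_(y | y <= x) f y.

(* Phi is the Moebius extension of phi: phi is completely monotone and, with f
   the Moebius inverse of phi, Phi(U) = sum_{V <= U} F(V) on \mathcal L, where
   F(<x>^* ) = f x and F = 0 on non-principal up-sets; V <= U means V \supseteq U. *)
Definition is_mobius_extension (phi : L -> R) (Phi : {set L} -> R) : Prop :=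
  Minf_L phi /\
  exists f : L -> R, is_mobius_inverse phi f /\
    forall U, in_calL U ->
      Phi U = \sum_(V : {set L} | in_calL V && (U \subset V))
                 (\sum_(x | V == up1 x) f x).

End Defs.

(* Main.v *)
Require Import Defs.
From HB Require Import structures.
From mathcomp Require Import all_boot all_order all_algebra.
From mathcomp Require Import reals.
Import Order.TTheory GRing.Theory Num.Theory.
Local Open Scope ring_scope.
Local Open Scope order_scope.
Section Mob.
Variables (T : finType) (R : zmodType) (lt : rel T).
Hypotheses (ltT : transitive lt) (ltI : irreflexive lt).
Variable g : T -> R.

Fixpoint mob n x : R := match n with
  | 0%N => g x
  | n.+1 => g x - \sum_(y | lt y x) mob n y end.

Let h x := #|[set y | lt y x]|.

Lemma h_lt y x : lt y x -> (h y < h x)%N.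
Proof.
move=> yx; apply: proper_card; apply/properP; split.
  by apply/subsetP=> z; rewrite !inE => zy; apply: ltT zy yx.
by exists y; rewrite !inE ?yx ?ltI.
Qed.

Lemma mob_stab n x : (h x < n)%N -> mob n x = mob n.+1 x.
Proof.
elim: n x => [//|n IH] x hx /=.
congr (_ - _); apply: eq_bigr => y yx; apply: IH.
exact: leq_trans (h_lt y x yx) _.
Qed.

Lemma mobius_exists : exists F : T -> R, forall x, g x = F x + \sum_(y | lt y x) F y.
Proof.
exists (mob #|T|.+1) => x.
have -> : mob #|T|.+1 x = g x - \sum_(y | lt y x) mob #|T| y by [].
rewrite [X in _ - _ + X](eq_bigr (mob #|T|)) ?subrK // => y yx; symmetry; apply: mob_stab.
by apply: leq_trans (h_lt y x yx) (max_card _).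
Qed.
End Mob.

Section Nablas.
Variables (T : Type) (I : finType) (R : realType).
Variables (P : T -> bool) (meet : T -> T -> T) (Q : pred I) (r : T -> I -> bool).
Variables (F : I -> R) (phi : T -> R).
Hypotheses (Pmeet : forall x a, P x -> P a -> P (meet x a))
  (rmeet : forall x a i, r (meet x a) i = r x i && r a i)
  (Hphi : forall x, P x -> phi x = \sum_(i | Q i && r x i) F i).

Lemma nablas_gen s x : all P s -> P x ->
  nablas meet s phi x = \sum_(i | [&& Q i, r x i & all (fun a => ~~ r a i) s]) F i.
Proof.
elim: s x => [|a s IH] x /=.
  by move=> _ Px; rewrite Hphi //; apply: eq_bigl => i; rewrite andbT.
move=> /andP[Pa Ps] Px; rewrite /nabla IH // IH ?Pmeet //.
rewrite (bigID (r a)) /= addrC -addrA.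
have -> : \sum_(i | [&& Q i, r x i & all (fun a0 => ~~ r a0 i) s] && r a i) F i =
          \sum_(i | [&& Q i, r (meet x a) i & all (fun a0 => ~~ r a0 i) s]) F i.
  by apply: eq_bigl => i; rewrite rmeet; case: (Q i); case: (r x i); case: (r a i);
     case: (all _ _).
rewrite subrr addr0; apply: eq_bigl => i.
by case: (Q i); case: (r x i); case: (r a i); case: (all _ _).
Qed.
End Nablas.

Section Main.
Context {d : Order.disp_t} {L : finLatticeType d} {R : realType}.

Lemma in_up1 (x y : L) : (y \in up1 x) = (x <= y).
Proof.
rewrite /up1 /upgen inE; apply/existsP/idP => [[a /andP[]]|xy].
  by rewrite inE => /eqP->.
by exists x; rewrite inE eqxx.
Qed.

Lemma in_up2 (a b y : L) : (y \in up2 a b) = (a <= y) || (b <= y).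
Proof.
rewrite /up2 /upgen inE; apply/existsP/idP => [[c /andP[]]|/orP[]h].
  by rewrite !inE => /orP[]/eqP-> ->; rewrite ?orbT.
  by exists a; rewrite !inE eqxx h.
by exists b; rewrite !inE eqxx h orbT.
Qed.

Lemma upsetP (U : {set L}) x y : is_upset U -> x \in U -> x <= y -> y \in U.
Proof. by move=> /forallP/(_ x)/forallP/(_ y)/implyP H xU xy; apply: H; rewrite xU. Qed.

Arguments upsetP {U x y}.

Lemma upset_up1 (x : L) : is_upset (up1 x).
Proof.
apply/forallP => y; apply/forallP => z; apply/implyP => /andP[].
by rewrite !in_up1 => h1 h2; apply: le_trans h1 h2.
Qed.

Lemma calL_up1 (x : L) : in_calL (up1 x).
Proof. by rewrite /in_calL upset_up1 /=; apply/set0Pn; exists x; rewrite in_up1. Qed.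

Lemma calL_up2 (a b : L) : in_calL (up2 a b).
Proof.
rewrite /in_calL; apply/andP; split; last by apply/set0Pn; exists a; rewrite in_up2 lexx.
apply/forallP => y; apply/forallP => z; apply/implyP => /andP[].
rewrite !in_up2 => /orP[]h1 h2; by rewrite (le_trans h1 h2) ?orbT.
Qed.

Lemma calL_union (U V : {set L}) : in_calL U -> in_calL V -> in_calL (U :|: V).
Proof.
move=> /andP[uU nU] /andP[uV _]; apply/andP; split.
  apply/forallP => y; apply/forallP => z; apply/implyP => /andP[].
  rewrite !inE => /orP[]h1 h2.
    by rewrite (upsetP uU h1 h2).
  by rewrite (upsetP uV h1 h2) orbT.
case/set0Pn: nU => x xU; apply/set0Pn; exists x; by rewrite inE xU.
Qed.

Lemma up1_sub (U : {set L}) x : is_upset U -> (up1 x \subset U) = (x \in U).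
Proof.
move=> uU; apply/subsetP/idP => [H|xU y]; first by apply: H; rewrite in_up1.
by rewrite in_up1; apply: upsetP.
Qed.

Lemma up2_sub (U : {set L}) a b : is_upset U -> (up2 a b \subset U) = (a \in U) && (b \in U).
Proof.
move=> uU; apply/subsetP/andP => [H|[aU bU] y]; first by split; apply: H; rewrite in_up2 lexx ?orbT.
by rewrite in_up2 => /orP[]h; [apply: upsetP aU h|apply: upsetP bU h].
Qed.

Lemma up1_inj : injective (@up1 _ L).
Proof.
move=> x y e; apply: le_anti; apply/andP; split.
  by rewrite -in_up1 e in_up1.
by rewrite -in_up1 -e in_up1.
Qed.

Lemma sum_principal (P : pred {set L}) (g : L -> R) :
  \sum_(V | P V) \sum_(x | V == up1 x) g x = \sum_(x | P (up1 x)) g x.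
Proof.
rewrite (exchange_big_dep predT) //= big_mkcond [RHS]big_mkcond /=.
apply: eq_bigr => x _.
case: (boolP (P (up1 x))) => Px.
  by rewrite (big_pred1 (up1 x)) // => V /=; apply/andP/eqP => [[_ /eqP]|->] //.
by rewrite big_pred0 // => V; apply/andP => -[+ /eqP e]; rewrite e (negbTE Px).
Qed.

Lemma nonprincipal (V : {set L}) : in_calL V -> (forall x, V != up1 x) ->
  exists a b, [/\ a \in V, b \in V & a `&` b \notin V].
Proof.
move=> /andP[uV /set0Pn[m0 m0V]] np.
case: (arg_minnP (fun m => #|[set z | z <= m]|) m0V) => m mV Hmin.
case: (boolP [exists v in V, m `&` v \notin V]).
  by case/existsP => v /andP[vV H]; exists m, v.
rewrite negb_exists => /forallP H; case/eqP: (np m); apply/eqP; rewrite eqEsubset.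
have mV2 : m \in V := mV.
rewrite (up1_sub _ m uV) mV2 andbT; apply/subsetP => v vV; rewrite in_up1.
have := H v; rewrite vV /= negbK => mvV.
apply/meet_idPl; apply/eqP; apply: contraT => ne.
suff : (#|[set z | (z <= m `&` v)%O]| < #|[set z | (z <= m)%O]|)%N by rewrite ltnNge Hmin.
apply: proper_card.
apply/properP; split.
  by apply/subsetP => z; rewrite !inE => h; apply: le_trans h (leIl _ _).
exists m; rewrite !inE ?lexx //; apply: contra ne => h; apply/eqP; apply: le_anti.
by rewrite h leIl.
Qed.

End Main.

Theorem proposition3p5 (d : Order.disp_t) (L : finLatticeType d) (R : realType)
  (phi : L -> R) (Phi : {set L} -> R) :
  M1 phi -> Minf_calL Phi -> (forall x, Pi Phi x = phi x) ->
  (is_mobius_extension phi Phi <->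
   forall a b : L, Phi (up2 a b) = phi (a `&` b)).
Proof.
move=> [phi0 phimon] [Phi0 Phicm] HPi; split.
  move=> [_ [f [Hf HPhi]]] a b.
  rewrite HPhi ?calL_up2 // sum_principal Hf; apply: eq_bigl => x.
  by rewrite calL_up1 (up2_sub _ _ _ (upset_up1 x)) !in_up1 lexI.
move=> H.
pose lt := fun V U : {set L} => [&& in_calL V, in_calL U & U \proper V].
have ltT : transitive lt.
  move=> V U W /and3P[cU cV pVU] /and3P[_ cW pWV]; apply/and3P; split => //.
  exact: proper_trans pWV pVU.
have ltI : irreflexive lt by move=> V; rewrite /lt properxx !andbF.
have [F HF] := @mobius_exists _ _ lt ltT ltI Phi.
have HPhi : forall U, in_calL U -> Phi U = \sum_(V | in_calL V && (U \subset V)) F V.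
  move=> U cU; rewrite HF [RHS](bigD1 U) /= ?cU ?subxx //; congr (_ + _).
  apply: eq_bigl => V; rewrite /lt cU properEneq eq_sym.
  by case: (in_calL V); case: (V != U); case: (U \subset V).
have rm : forall (U a W : {set L}), (U :|: a \subset W) = (U \subset W) && (a \subset W).
  by move=> *; rewrite subUset.
have NG := @nablas_gen _ _ _ in_calL (fun U V => U :|: V) in_calL (fun U W => U \subset W)
  F Phi calL_union rm HPhi.
have Fnn : forall V, in_calL V -> V != setT -> 0 <= F V.
  move=> V cV nT; have /andP[uV _] := cV.
  have := properT V; rewrite nT => /properP[_ [x0 _ x0V]].
  pose s := [seq up1 x | x in ~: V].
  have sz : (0 < size s)%N.
    by rewrite /s size_map -cardE card_gt0; apply/set0Pn; exists x0; rewrite inE.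
  have alls : all in_calL s by apply/allP => a /mapP[x _ ->]; apply: calL_up1.
  have := Phicm s V sz alls cV; rewrite NG // (big_pred1 V) //.
    move=> W /=; apply/idP/eqP => [/and3P[cW VW /allP Hall]|->]; last first.
      rewrite cV subxx /=; apply/allP => a /mapP[x]; rewrite mem_enum inE => xV ->.
      by rewrite up1_sub.
    apply/eqP; rewrite eqEsubset VW andbT; apply/subsetP => x xW; apply: contraT => xV.
    have /andP[uW _] := cW.
    have := Hall (up1 x); rewrite up1_sub // xW; apply.
    by apply: map_f; rewrite mem_enum inE.
have Fz : forall V, in_calL V -> (forall x, V != up1 x) -> F V = 0.
  move=> V cV np; have [a [b [aV bV abV]]] := nonprincipal _ cV np.
  have /andP[uV _] := cV.
  have E := H a b; rewrite -HPi /Pi HPhi ?calL_up2 // HPhi ?calL_up1 // in E.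
  move: E; rewrite (bigID (fun W : {set L} => up1 (a `&` b) \subset W)) /=.
  have -> : \sum_(i | in_calL i && (up2 a b \subset i) && (up1 (a `&` b) \subset i)) F i =
            \sum_(i | in_calL i && (up1 (a `&` b) \subset i)) F i.
    apply: eq_bigl => W; case: (boolP (in_calL W)) => //= /andP[uW _].
    rewrite up2_sub // up1_sub //; apply/andP/idP => [[]//|h]; split => //.
    by apply/andP; split; apply: upsetP h _; rewrite ?leIl ?leIr.
  move=> /eqP; rewrite -subr_eq0 addrAC subrr add0r => /eqP E.
  apply: (psumr_eq0P _ E).
    move=> W /andP[/andP[cW _] nW]; apply: Fnn => //; apply: contra nW => /eqP->.
    exact: subsetT.
  by rewrite cV up2_sub // aV bV /= up1_sub.
pose f := fun x => F (up1 x).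
have Hrep : forall U, in_calL U ->
    Phi U = \sum_(V : {set L} | in_calL V && (U \subset V)) (\sum_(x | V == up1 x) f x).
  move=> U cU; rewrite HPhi //; apply: eq_bigr => V /andP[cV _].
  case: (pickP (fun x => V == up1 x)) => [x /eqP-> | none].
    rewrite (big_pred1 x) // => y /=; apply/eqP/eqP => [/up1_inj|->] //.
  rewrite big_pred0 // Fz // => x; exact: negbT (none x).
have Hmob : is_mobius_inverse phi f.
  move=> x; rewrite -HPi /Pi Hrep ?calL_up1 // sum_principal; apply: eq_bigl => y.
  by rewrite calL_up1 (up1_sub _ _ (upset_up1 y)) in_up1.
split; last by exists f.
split => // s x sz _ _.
have NL := @nablas_gen _ _ _ (fun _ => true) Order.meet predT (fun x y => y <= x) f phi
  (fun _ _ _ _ => erefl) (fun x a i => lexI i x a)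
  (fun x _ => etrans (Hmob x) (eq_bigl _ _ (fun i => erefl))).
rewrite NL //; last by apply/allP.
apply: sumr_ge0 => i /and3P[_ _]; case: s sz => // a s _ /= /andP[nia _].
apply: Fnn; first exact: calL_up1.
by apply: contra nia => /eqP e; rewrite -in_up1 e inE.
Qed.
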